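(* Assume the standing setup. If $\lambda_1(\boldsymbol\Omega_K)>1$, then $\mathbf 0_K\prec\mathbf g(1)\prec\mathbf 1_K$.
   Context: Standing setup: $K\ge1$, $\boldsymbol\rho=(\rho_k)$ with $\rho_k\in(0,1)$, $\sum\rho_k=1$; $\mathbf S_K=(s_{kl})$ symmetric with $s_{kl}>0$; $\mathbf D_{\mathbf v}$ diagonal with diagonal $\mathbf v$; $\boldsymbol\Omega_K=\mathbf D_{\boldsymbol\rho^{\odot1/2}}\mathbf S_K\mathbf D_{\boldsymbol\rho^{\odot1/2}}$, $\boldsymbol\Gamma_K=\mathbf S_K\mathbf D_{\boldsymbol\rho}$; $\lambda_1$ = largest eigenvalue. For each $N$, $[N]$ is split into consecutive blocks $B_k$ with $|B_k|/N\to\rho_k$; $\Sigma_{ij}=s_{kl}$ for $i\in B_k,j\in B_l$; $\mathbf H$ symmetric with independent standard Gaussian entries on/above the diagonal; $\mathbf X=\mathbf H\odot\boldsymbol\Sigma^{\odot1/2}-N^{-1/2}\mathrm{Diag}(\boldsymbol\Sigma\mathbf 1)$; $\mu_X$ the a.s. limiting spectral distribution of $\mathbf X/\sqrt N$. QVE: for $z\in\mathbb H_-=\{\Im z<0\}$, $\mathbf g(z)$ is the unique solution in $(\mathbb H_+)^K$ of $\mathbf 1_K=z\mathbf g-\mathbf g\odot\boldsymbol\Gamma_K(\mathbf g-\mathbf 1_K)$, $\sum_k\rho_kg_k$ being the Stieltjes transform of $\mu_X$; $\mathbf g$ extends continuously to $\mathbb H_-\cup\mathbb R$, analytically off $\mathrm{Supp}(\mu_X)$,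 and $\mathbf g(1)$ is the value of this extension at $1$. $\prec$ is entrywise strict inequality. *)

(* Defs.v *)
From HB Require Import structures.
From mathcomp Require Import all_boot all_order all_algebra.
From mathcomp Require Import all_classical all_reals all_analysis.
From mathcomp Require Import complex.
Set Implicit Arguments. Unset Strict Implicit. Unset Printing Implicit Defensive.
Import Order.TTheory GRing.Theory Num.Theory numFieldNormedType.Exports.
Local Open Scope ring_scope.
Local Open Scope classical_set_scope.

(* The complex numbers over a real field R, seen as a numFieldType so that
   it carries its standard (norm) topology from MathComp-Analysis. *)
Definition Cplx (R : realType) : numFieldType := R[i].

Definition OmegaK (R : realType) (K : nat) (rho : 'I_K -> R) (S : 'M[R]_K)
  : 'M[R]_K :=
  diag_mx (\row_k Num.sqrt (rho k)) *m S *m diag_mx (\row_k Num.sqrt (rho k)).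

Definition GammaK (R : realType) (K : nat) (rho : 'I_K -> R) (S : 'M[R]_K)
  : 'M[R]_K :=
  S *m diag_mx (\row_k rho k).

Definition lambda1 (R : realType) (K : nat) (A : 'M[R]_K) : R :=
  sup [set a : R | eigenvalue A a].

Definition Hminus (R : realType) : set (Cplx R) := [set z | complex.Im z < 0].
Definition Hplus (R : realType) : set (Cplx R) := [set z | 0 < complex.Im z].

(* g : C -> C^K is the solution of the QVE
     1_K = z g - g .* Gamma_K (g - 1_K)
   on H_-, with values in (H_+)^K, extended continuously to H_- u R
   (the closed lower half plane). *)
Definition QVE_solution_ext (R : realType) (K : nat) (rho : 'I_K -> R)
  (S : 'M[R]_K) (g : Cplx R -> 'I_K -> Cplx R) : Prop :=
  [/\ forall z, @Hminus R z -> forall k, @Hplus R (g z k),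
      forall z, @Hminus R z -> forall k,
        1 = z * g z k - g z k * \sum_(l < K) (real_complex R ((GammaK rho S) k l) : Cplx R) * (g z l - 1)
    & forall k, {within [set z : Cplx R | complex.Im z <= 0],
                  continuous (fun z => g z k)}].

(* Main.v *)
Require Import Defs.
From HB Require Import structures.
From mathcomp Require Import all_boot all_order all_algebra.
From mathcomp Require Import all_classical all_reals all_analysis.
From mathcomp Require Import complex.
Import Order.TTheory GRing.Theory Num.Theory numFieldNormedType.Exports.
Local Open Scope ring_scope.
From mathcomp Require Import ring lra.
Set Implicit Arguments. Unset Strict Implicit. Unset Printing Implicit Defensive.
Local Open Scope classical_set_scope.
Local Open Scope complex_scope.
Lemma le_inv (R : realType) (x D : R) : 0 < D -> (D^-1 <= x) = (1 <= x * D).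
Proof. by move=> D0; rewrite -div1r ler_pdivrMr. Qed.
Lemma ge_inv (R : realType) (x D : R) : 0 < D -> (x <= D^-1) = (x * D <= 1).
Proof. by move=> D0; rewrite -div1r ler_pdivlMr. Qed.

Definition Fm (R : realType) K (G : 'I_K -> 'I_K -> R) (q : 'I_K -> R) k :=
  (1 + \sum_l G k l * (1 - q l))^-1.

Lemma Fden_ge1 (R : realType) K (G : 'I_K -> 'I_K -> R) (G0 : forall k l, 0 <= G k l)
  (q : 'I_K -> R) k : (forall l, q l <= 1) -> 1 <= 1 + \sum_l G k l * (1 - q l).
Proof.
move=> hq; rewrite lerDl; apply: sumr_ge0 => l _; apply: mulr_ge0 => //.
by rewrite subr_ge0.
Qed.

Lemma Fmono (R : realType) K (G : 'I_K -> 'I_K -> R) (G0 : forall k l, 0 <= G k l)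
  (x y : 'I_K -> R) k : (forall l, x l <= y l) -> (forall l, y l <= 1) ->
  Fm G x k <= Fm G y k.
Proof.
move=> hxy hy; rewrite /Fm.
have hx : forall l, x l <= 1 by move=> l; apply: le_trans (hxy l) (hy l).
have D1 := Fden_ge1 G0 k hy; have D2 := Fden_ge1 G0 k hx.
rewrite lef_pV2 ?posrE; [|lra|lra].
rewrite lerD2l; apply: ler_sum => l _; apply: ler_wpM2l => //.
by rewrite lerD2l lerN2.
Qed.

Lemma Fbounds (R : realType) K (G : 'I_K -> 'I_K -> R) (G0 : forall k l, 0 <= G k l)
  (q : 'I_K -> R) k : (forall l, q l <= 1) -> 0 < Fm G q k <= 1.
Proof.
move=> hq; have D := Fden_ge1 G0 k hq; rewrite /Fm invr_gt0 invf_le1; last lra.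
apply/andP; split; lra.
Qed.

Lemma fixpt (R : realType) K (k0 : 'I_K) (G : 'I_K -> 'I_K -> R) (G0 : forall k l, 0 <= G k l)
  (a : R) (p : 'I_K -> R) : 1 < a -> (forall k, 0 < p k) ->
  (forall k, a * p k <= \sum_l G k l * p l) ->
  exists r : 'I_K -> R, (forall k, 0 < r k < 1) /\
     forall k, r k * (1 + \sum_l G k l * (1 - r l)) = 1.
Proof.
move=> a1 p0 hp.
pose M := \sum_k p k.
have pM : forall k, p k <= M.
  move=> k; rewrite /M (bigD1 k) //= lerDl; apply: sumr_ge0 => l _; exact: ltW.
have M0 : 0 < M by exact: (lt_le_trans (p0 k0) (pM k0)).
pose eta := (a - 1) / (a * M).
have eta0 : 0 < eta by rewrite /eta divr_gt0 ?mulr_gt0 //; lra.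
have etap : forall k, eta * a * p k <= a - 1.
  move=> k; rewrite /eta.
  have -> : (a - 1) / (a * M) * a * p k = (a - 1) * (p k / M).
    by field; rewrite (gt_eqF M0) (gt_eqF (lt_trans ltr01 a1)).
  rewrite -[X in _ <= X]mulr1 ler_wpM2l ?subr_ge0 ?(ltW a1)//.
  by rewrite ler_pdivrMr ?mul1r.
have etap1 : forall k, eta * p k < 1.
  move=> k; have := etap k; have := p0 k; have: 0 < eta * p k by apply: mulr_gt0.
  nra.
pose q0 := fun k => 1 - eta * p k.
pose Q := [set q : 'I_K -> R | (forall k, 0 <= q k <= 1) /\ forall k, Fm G q k <= q k].
have Qq0 : Q q0.
  split=> k.
    rewrite /q0; have := etap1 k; have : 0 < eta * p k by apply: mulr_gt0.
    move=> *; apply/andP; split; lra.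
  have -> : Fm G q0 k = (1 + eta * \sum_l G k l * p l)^-1.
    rewrite /Fm mulr_sumr; congr (1 + _)^-1; apply: eq_bigr => l _.
    by rewrite /q0; ring.
  have X0 : 0 <= \sum_l G k l * p l.
    by apply: sumr_ge0 => l _; apply: mulr_ge0 => //; exact: ltW.
  have D0 : 0 < 1 + eta * \sum_l G k l * p l.
    by have := mulr_ge0 (ltW eta0) X0; lra.
  rewrite le_inv //.
  rewrite /q0; have := hp k; have := etap k; have := etap1 k; have := p0 k.
  move: (\sum_l G k l * p l) => X pk0 h1 h2 h3.
  have t1 : 0 <= (1 - eta * p k) * (eta * (X - a * p k)).
    apply: mulr_ge0; first lra.
    apply: mulr_ge0; lra.
  have t2 : 0 <= eta * p k * (a - 1 - eta * a * p k).
    apply: mulr_ge0; first by apply: mulr_ge0; lra.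
    lra.
  nra.
have lbQ : forall k, lbound ((fun q => q k) @` Q) 0.
  by move=> k _ [q [Qq _] <-]; have /andP[] := Qq k.
have neQ : forall k, nonempty ((fun q => q k) @` Q).
  by move=> k; exists (q0 k); exists q0.
pose r := fun k => inf ((fun q => q k) @` Q).
have rq : forall q, Q q -> forall k, r k <= q k.
  move=> q Qq k; apply: (ge_inf (ex_intro _ 0 (lbQ k))).
  by exists q.
have r0 : forall k, 0 <= r k by move=> k; apply: lb_le_inf.
have r1 : forall k, r k <= 1.
  move=> k; apply: le_trans (rq _ Qq0 k) _; rewrite /q0.
  have := mulr_gt0 eta0 (p0 k); lra.
have Fr : forall k, Fm G r k <= r k.
  move=> k; apply: lb_le_inf => // _ [q Qq <-].
  apply: le_trans (Fmono G0 k (rq q Qq) _) _.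
    by move=> l; case: Qq => Qq _; have /andP[] := Qq l.
  by case: Qq.
have QFr : Q (Fm G r).
  split=> k; first by have /andP[h1 h2] := Fbounds G0 k r1; apply/andP; split=> //; exact: ltW.
  apply: Fmono => // l; exact: le_trans (Fr l) (r1 l).
have rF : forall k, r k = Fm G r k.
  by move=> k; apply/eqP; rewrite eq_le Fr rq.
exists r; split=> k.
  apply/andP; split; first by rewrite rF; have /andP[] := Fbounds G0 k r1.
  apply: le_lt_trans (rq _ Qq0 k) _; rewrite /q0.
  have := mulr_gt0 eta0 (p0 k); lra.
rewrite {1}rF /Fm mulVf // gt_eqF //.
have := Fden_ge1 G0 k r1; lra.
Qed.
Lemma OmegaE (R : realType) K (rho : 'I_K -> R) (S : 'M[R]_K) k l :
  OmegaK rho S k l = Num.sqrt (rho k) * S k l * Num.sqrt (rho l).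
Proof. by rewrite /OmegaK mul_mx_diag mul_diag_mx !mxE. Qed.

Lemma perron (R : realType) K (rho : 'I_K -> R) (hrho : forall k, 0 < rho k)
  (S : 'M[R]_K) (hSsym : S^T = S) (hSpos : forall k l, 0 < S k l) :
  1 < lambda1 (OmegaK rho S) ->
  exists a : R, 1 < a /\ exists p : 'I_K -> R, (forall k, 0 < p k) /\
    forall k, a * p k <= \sum_l (S k l * rho l) * p l.
Proof.
rewrite /lambda1 => hl.
set E := [set a | eigenvalue (OmegaK rho S) a] in hl.
have hE : has_sup E.
  apply: contrapT => /sup_out hs; move: hl; rewrite hs; lra.
have [a Ea lta] := sup_adherent (eps := sup E - 1) ltac:(lra) hE.
have a1 : 1 < a by lra.
exists a; split => //.
have /eigenvalueP [v hv v0] := Ea.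
set Om := OmegaK rho S in hv.
have Om0 : forall k l, 0 <= Om k l.
  move=> k l; rewrite /Om OmegaE; apply: mulr_ge0; last exact: sqrtr_ge0.
  by apply: mulr_ge0; [exact: sqrtr_ge0 | exact: ltW].
have OmS : forall k l, Om k l = Om l k.
  move=> k l; rewrite /Om !OmegaE.
  have -> : S l k = S^T k l by rewrite mxE.
  by rewrite hSsym; ring.
pose y := fun k => `|v 0 k|.
have y0 : forall k, 0 <= y k by move=> k; exact: normr_ge0.
have [k1 yk1] : exists k, 0 < y k.
  apply: contrapT => hn; move/eqP: v0; apply; apply/rowP => k.
  rewrite mxE; apply/eqP; rewrite -normr_eq0; apply/eqP/le_anti.
  rewrite normr_ge0 andbT leNgt; apply/negP => h; apply: hn; by exists k.
have hy : forall l, a * y l <= \sum_k y k * Om k l.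
  move=> l; have := congr1 (fun M : 'M[R]_(1,K) => M 0 l) hv; rewrite /= !mxE => e.
  rewrite /y -[a]ger0_norm; last lra.
  rewrite -normrM -e; apply: le_trans (ler_norm_sum _ _ _) _.
  apply: ler_sum => k _; rewrite normrM (ger0_norm (Om0 k l)) //.
pose q := fun l => \sum_k y k * Om k l.
have q0 : forall l, 0 < q l.
  move=> l; rewrite /q (bigD1 k1) //=; apply: ltr_pwDl.
    apply: mulr_gt0 => //; rewrite /Om OmegaE; apply: mulr_gt0; last by rewrite sqrtr_gt0.
    by apply: mulr_gt0; [rewrite sqrtr_gt0 | ].
  by apply: sumr_ge0 => k _; apply: mulr_ge0.
have hq : forall m, a * q m <= \sum_l q l * Om l m.
  move=> m; rewrite {1}/q mulr_sumr; apply: ler_sum => l _.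
  by rewrite mulrA ler_wpM2r // hy.
have sr0 : forall k, 0 < Num.sqrt (rho k) by move=> k; rewrite sqrtr_gt0.
exists (fun m => q m / Num.sqrt (rho m)); split.
  by move=> k; apply: divr_gt0.
move=> k.
have e : \sum_l (S k l * rho l) * (q l / Num.sqrt (rho l)) =
   (\sum_l q l * Om l k) / Num.sqrt (rho k).
  rewrite mulr_suml; apply: eq_bigr => l _.
  rewrite /Om OmegaE.
  have -> : S l k = S^T k l by rewrite mxE.
  rewrite hSsym -{1}(sqr_sqrtr (ltW (hrho l))).
  by field; rewrite !gt_eqF.
rewrite e mulrA ler_pM2r //; last by rewrite invr_gt0.
Qed.
Definition nc (R : realType) (x : R[i]) : R := Num.sqrt (complex.Re x ^+ 2 + complex.Im x ^+ 2).

Lemma ncE (R : realType) (x : R[i]) : `|x| = (nc x)%:C.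
Proof. by rewrite normc_def. Qed.

Lemma nc_ge0 (R : realType) (x : R[i]) : 0 <= nc x.
Proof. exact: sqrtr_ge0. Qed.

Lemma nc_sqr (R : realType) (x : R[i]) : nc x ^+ 2 = complex.Re x ^+ 2 + complex.Im x ^+ 2.
Proof. by rewrite /nc sqr_sqrtr // addr_ge0 // sqr_ge0. Qed.

Lemma ncM (R : realType) (x y : R[i]) : nc (x * y) = nc x * nc y.
Proof. by apply: complexI; rewrite rmorphM /= -!ncE normrM. Qed.

Lemma ncD (R : realType) (x y : R[i]) : nc (x + y) <= nc x + nc y.
Proof. by rewrite -lecR rmorphD /= -!ncE ler_normD. Qed.

Lemma ncR (R : realType) (c : R) : nc c%:C = `|c|.
Proof. by rewrite /nc /= expr0n addr0 sqrtr_sqr. Qed.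

Lemma nc_sum (R : realType) (I : finType) (F : I -> R[i]) :
  nc (\sum_i F i) <= \sum_i nc (F i).
Proof.
apply: (big_rec2 (fun x y => nc x <= y)).
  by rewrite ncR normr0.
move=> i y x _ h; apply: le_trans (ncD _ _) _; exact: lerD.
Qed.


Lemma Re_sum (R : realType) (I : finType) (F : I -> R[i]) :
  complex.Re (\sum_i F i) = \sum_i complex.Re (F i).
Proof. by apply: (big_morph (@complex.Re R)) => // -[a b] [c d]. Qed.

Lemma Im_sum (R : realType) (I : finType) (F : I -> R[i]) :
  complex.Im (\sum_i F i) = \sum_i complex.Im (F i).
Proof. by apply: (big_morph (@complex.Im R)) => // -[a b] [c d]. Qed.

Lemma ReRM (R : realType) (c : R) (x : R[i]) : complex.Re (c%:C * x) = c * complex.Re x.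
Proof. by case: x => a b /=; rewrite mul0r subr0. Qed.

Lemma ImRM (R : realType) (c : R) (x : R[i]) : complex.Im (c%:C * x) = c * complex.Im x.
Proof. by case: x => a b /=; rewrite mul0r addr0. Qed.

Lemma mul_eq1 (R : realType) (x w : R[i]) : x * w = 1 ->
  complex.Re x * complex.Re w - complex.Im x * complex.Im w = 1 /\ complex.Re x * complex.Im w + complex.Im x * complex.Re w = 0.
Proof. by case: x => a b; case: w => c d /= [-> ->]. Qed.
Lemma amgm (R : realType) (n x y T mu : R) : 0 < mu -> 0 <= n -> 0 <= x -> 0 <= y ->
  0 <= T -> n ^+ 2 <= T * x * y -> n <= (mu * x + T * y / mu) / 2.
Proof.
move=> mu0 n0 x0 y0 T0 h.
set u := mu * x; set v := T * y / mu.
have u0 : 0 <= u by apply: mulr_ge0 => //; exact: ltW.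
have v0 : 0 <= v by apply: divr_ge0; [exact: mulr_ge0| exact: ltW].
have uv : T * x * y = u * v by rewrite /u /v; field; rewrite gt_eqF.
rewrite uv in h.
have : 0 <= (u - v) ^+ 2 by exact: sqr_ge0.
nra.
Qed.

Lemma arith1 (R : realType) (nd ng r t S1 X Y pp b : R) : 0 < nd -> 0 < ng -> 0 < r ->
  0 < pp -> 0 < b -> 0 <= t -> 0 <= Y ->
  nd <= ng * r * (t + S1) ->
  S1 <= (nd / (ng * pp) * X + (nd ^+ 2 / (pp * b)) * Y / (nd / (ng * pp))) / 2 ->
  r * X = pp -> ng ^+ 2 * Y <= b -> nd * (1 - r) <= 2 * ng * r * t.
Proof.
move=> nd0 ng0 r0 pp0 b0 t0 Y0 h1 h2 h3 h4.
have e : (nd / (ng * pp) * X + (nd ^+ 2 / (pp * b)) * Y / (nd / (ng * pp))) / 2 * (ng * r)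
   = (nd * (r * X) / pp + nd * r * (ng ^+ 2 * Y) / b) / 2.
  by field; rewrite !gt_eqF.
have h5 : ng * r * S1 <= (nd * (r * X) / pp + nd * r * (ng ^+ 2 * Y) / b) / 2.
  rewrite -e mulrC ler_wpM2r //; apply: mulr_ge0; exact: ltW.
rewrite h3 mulfK ?gt_eqF // in h5.
have h6 : nd * r * (ng ^+ 2 * Y) / b <= nd * r.
  rewrite ler_pdivrMr // ler_wpM2l //; apply: mulr_ge0; exact: ltW.
nra.
Qed.

Lemma arith2 (R : realType) (ndj ndk ngk rk t ppj bj bk Gkj : R) :
  0 <= ndj -> 0 <= ndk -> 0 < ngk -> 0 < rk < 1 -> 0 < t -> 0 < ppj ->
  0 < bj -> 0 < bk -> 0 < Gkj ->
  ndj ^+ 2 <= ndk ^+ 2 / ((1 - rk) * bk) * ppj * bj ->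
  ngk ^+ 2 * Gkj * bj <= bk ->
  ndk * (1 - rk) <= 2 * ngk * rk * t ->
  ndj ^+ 2 <= (2 * rk / (1 - rk)) ^+ 2 * ppj / ((1 - rk) * Gkj) * t ^+ 2.
Proof.
move=> ndj0 ndk0 ngk0 /andP[rk0 rk1] t0 ppj0 bj0 bk0 G0 h1 h2 h3.
have pk0 : 0 < 1 - rk by lra.
apply: le_trans h1 _.
have h4 : ndk ^+ 2 / ((1 - rk) * bk) * ppj * bj <= ndk ^+ 2 * ppj / ((1 - rk) * ngk ^+ 2 * Gkj).
  have e1 : ndk ^+ 2 / ((1 - rk) * bk) * ppj * bj = (ndk ^+ 2 * ppj / (1 - rk)) * (bj / bk).
    by field; rewrite !gt_eqF.
  have e2 : ndk ^+ 2 * ppj / ((1 - rk) * ngk ^+ 2 * Gkj) = (ndk ^+ 2 * ppj / (1 - rk)) * (ngk ^+ 2 * Gkj)^-1.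
    by field; rewrite !gt_eqF // exprn_gt0.
  have c0 : 0 <= ndk ^+ 2 * ppj / (1 - rk).
    by apply: divr_ge0; [apply: mulr_ge0; [exact: sqr_ge0|exact: ltW]|exact: ltW].
  rewrite e1 e2 ler_wpM2l //.
  have q0 : 0 < ngk ^+ 2 * Gkj by rewrite mulr_gt0 ?exprn_gt0.
  rewrite ler_pdivrMr // -subr_ge0.
  have -> : (ngk ^+ 2 * Gkj)^-1 * bk - bj = (bk - ngk ^+ 2 * Gkj * bj) / (ngk ^+ 2 * Gkj).
    by field; rewrite !gt_eqF.
  by apply: divr_ge0; [rewrite subr_ge0 | exact: ltW].
apply: le_trans h4 _.
have h5 : ndk <= 2 * ngk * rk * t / (1 - rk) by rewrite ler_pdivlMr.
have h6 : ndk ^+ 2 <= (2 * ngk * rk * t / (1 - rk)) ^+ 2.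
  by rewrite ler_pXn2r // ?nnegrE //; apply: divr_ge0 => //; [|exact: ltW]; apply: mulr_ge0; [|exact: ltW]; apply: mulr_ge0; [|exact: ltW]; apply: mulr_ge0 => //; exact: ltW.
have e3 : (2 * rk / (1 - rk)) ^+ 2 * ppj / ((1 - rk) * Gkj) * t ^+ 2 =
   (2 * ngk * rk * t / (1 - rk)) ^+ 2 * ppj / ((1 - rk) * ngk ^+ 2 * Gkj).
  by field; rewrite !gt_eqF.
rewrite e3 !mulrA ler_wpM2r //; first by rewrite invr_ge0 ?mulr_ge0 ?sqr_ge0 //; exact: ltW.
rewrite ler_wpM2r //; exact: ltW.
Qed.

Lemma ImB (R : realType) (x y : R[i]) : complex.Im (x - y) = complex.Im x - complex.Im y.
Proof. by case: x; case: y. Qed.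
Lemma ReB (R : realType) (x y : R[i]) : complex.Re (x - y) = complex.Re x - complex.Re y.
Proof. by case: x; case: y. Qed.

Lemma estimate (R : realType) K (G : 'I_K -> 'I_K -> R) (G0 : forall k l, 0 < G k l)
  (r : 'I_K -> R) (hr : forall k, 0 < r k < 1)
  (hfix : forall k, r k * (1 + \sum_l G k l * (1 - r l)) = 1)
  (gz : 'I_K -> R[i]) (t : R) (t0 : 0 < t)
  (hIm : forall k, 0 < complex.Im (gz k))
  (heq : forall k, 1 = (1 +i* -t) * gz k - gz k * \sum_l (G k l)%:C * (gz l - 1))
  (j : 'I_K) :
  nc (gz j - (r j)%:C) ^+ 2 <=
   (\sum_k ((2 * r k / (1 - r k)) ^+ 2 * (1 - r j) / ((1 - r k) * G k j))) * t ^+ 2.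
Proof.
pose b := fun k => complex.Im (gz k).
pose ng := fun k => nc (gz k).
pose nd := fun k => nc (gz k - (r k)%:C).
pose pp := fun k => 1 - r k.
have pp0 : forall k, 0 < pp k by move=> k; have /andP[] := hr k; rewrite /pp; lra.
have ng0 : forall k, 0 < ng k.
  move=> k; have h := nc_sqr (gz k); have hb := hIm k.
  have hn := nc_ge0 (gz k); rewrite /ng.
  rewrite lt_neqAle hn andbT; apply/negP => /eqP h0.
  move: h; rewrite -h0 expr0n /=; have := sqr_ge0 (complex.Re (gz k)).
  have : 0 < complex.Im (gz k) ^+ 2 by rewrite exprn_gt0.
  lra.
have nd0 : forall k, 0 <= nd k by move=> k; exact: nc_ge0.
have hb : forall k, b k = ng k ^+ 2 * (t + \sum_l G k l * b l).
  move=> k.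
  set w := (1 +i* -t) - \sum_l (G k l)%:C * (gz l - 1).
  have hw : gz k * w = 1 by rewrite (heq k) /w; ring.
  have [e1 e2] := mul_eq1 hw.
  have Iw : complex.Im w = - t - \sum_l G k l * b l.
    rewrite /w ImB Im_sum /=; congr (_ - _); apply: eq_bigr => l _.
    by rewrite ImRM ImB /= subr0.
  have -> : t + \sum_l G k l * b l = - complex.Im w by rewrite Iw; ring.
  rewrite /ng nc_sqr -/(b k).
  move: e1 e2; rewrite -/(b k); move: (complex.Re (gz k)) (complex.Re w) (complex.Im w) (b k).
  move=> a c d bb e1 e2.
  transitivity (bb * (a * c - bb * d) - a * (a * d + bb * c)); first by rewrite e1 e2; ring.
  ring.
have hd : forall k, nd k <= ng k * r k * (t + \sum_l G k l * nd l).
  move=> k.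
  set w := (1 +i* -t) - \sum_l (G k l)%:C * (gz l - 1).
  have hw : gz k * w = 1 by rewrite (heq k) /w; ring.
  set w' := 1 - \sum_l (G k l)%:C * ((r l)%:C - 1).
  have hw' : (r k)%:C * w' = 1.
    have -> : (1 : R[i]) = (1 : R)%:C by [].
    rewrite -(hfix k) rmorphM; congr (_ * _).
    rewrite /w' rmorphD rmorph1 rmorph_sum /= -sumrN; congr (_ + _); apply: eq_bigr => l _.
    by rewrite rmorphM rmorphB /= rmorph1; ring.
  have ed : gz k - (r k)%:C = gz k * (r k)%:C * (w' - w).
    rewrite mulrBr -{1}[gz k]mulr1 -hw' -{2}[(r k)%:C]mulr1 -hw; ring.
  have ew : w' - w = (0 +i* t) + \sum_l (G k l)%:C * (gz l - (r l)%:C).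
    rewrite /w /w'.
    have -> : \sum_l (G k l)%:C * (gz l - (r l)%:C) =
      \sum_l (G k l)%:C * (gz l - 1) - \sum_l (G k l)%:C * ((r l)%:C - 1).
      rewrite -sumrB; apply: eq_bigr => l _; ring.
    have -> : (0 +i* t) = 1 - (1 +i* -t) :> R[i].
      apply/eqP; rewrite eq_complex /=; apply/andP; split; apply/eqP; ring.
    ring.
  rewrite /nd ed !ncM ncR (ger0_norm (ltW (proj1 (andP (hr k))))) -/(ng k).
  apply: ler_wpM2l; first by apply: mulr_ge0; [exact: ltW|exact: ltW (proj1 (andP (hr k)))].
  rewrite ew; apply: le_trans (ncD _ _) _.
  have -> : nc (0 +i* t) = t.
    by rewrite /nc /= expr0n add0r sqrtr_sqr ger0_norm //; exact: ltW.
  rewrite lerD2l; apply: le_trans (nc_sum _) _; apply: ler_sum => l _.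
  by rewrite ncM ncR ger0_norm //; exact: ltW.
have hpp : forall k, r k * \sum_l G k l * pp l = pp k.
  move=> k; have := hfix k; rewrite /pp; lra.
have b0 : forall l, 0 < b l := hIm.
pose m := fun l => nd l ^+ 2 / (pp l * b l).
have [k hk] : exists k, forall l, m l <= m k.
  by case: (@arg_maxP _ _ _ j xpredT m isT) => k _ h; exists k => l; exact: h.
pose T2 := m k.
have T20 : 0 <= T2.
  by rewrite /T2 /m; apply: divr_ge0; [exact: sqr_ge0| apply: mulr_ge0; exact: ltW].
have h4 : forall l, nd l ^+ 2 <= T2 * pp l * b l.
  by move=> l; have := hk l; rewrite /m -/T2 ler_pdivrMr ?mulr_gt0 // mulrA.
have Yk : ng k ^+ 2 * \sum_l G k l * b l <= b k.
  rewrite [X in _ <= X](hb k); apply: ler_wpM2l; first exact: sqr_ge0.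
  by rewrite lerDr; exact: ltW.
have h5 : nd k * (1 - r k) <= 2 * ng k * r k * t.
  case: (eqVneq (nd k) 0) => [->|ndk0].
    rewrite mul0r; apply: mulr_ge0; last exact: ltW.
    apply: mulr_ge0; last by have /andP[h _] := hr k; exact: ltW.
    apply: mulr_ge0 => //; exact: ltW.
  have ndk : 0 < nd k by rewrite lt_neqAle eq_sym ndk0 nd0.
  pose mu := nd k / (ng k * pp k).
  have mu0 : 0 < mu by rewrite /mu divr_gt0 ?mulr_gt0.
  apply: (@arith1 R (nd k) (ng k) (r k) t (\sum_l G k l * nd l)
      (\sum_l G k l * pp l) (\sum_l G k l * b l) (pp k) (b k)) => //.
  - by have /andP[] := hr k.
  - exact: ltW.
  - by apply: sumr_ge0 => l _; apply: mulr_ge0; exact: ltW.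
  - apply: le_trans (_ : _ <= \sum_l G k l * ((mu * pp l + T2 * b l / mu) / 2)) _.
      apply: ler_sum => l _; apply: ler_wpM2l; first exact: ltW.
      apply: amgm => //; try exact: ltW; exact: h4.
    rewrite le_eqVlt; apply/orP; left; apply/eqP.
    rewrite -/mu -/T2 !mulr_sumr !mulr_suml -big_split /= mulr_suml.
    apply: eq_bigr => l _; rewrite /T2 /m; field.
    by rewrite (gt_eqF mu0) (gt_eqF (b0 k)) (gt_eqF (pp0 k)) ?(gt_eqF (ng0 k)) ?(gt_eqF ndk).
have h6 : ng k ^+ 2 * G k j * b j <= b k.
  apply: le_trans Yk; rewrite -mulrA; apply: ler_wpM2l; first exact: sqr_ge0.
  rewrite (bigD1 j) //= lerDl; apply: sumr_ge0 => l _; apply: mulr_ge0; exact: ltW.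
have h7 := @arith2 R (nd j) (nd k) (ng k) (r k) t (pp j) (b j) (b k) (G k j)
  (nd0 j) (nd0 k) (ng0 k) (hr k) t0 (pp0 j) (b0 j) (b0 k) (G0 k j) (h4 j) h6 h5.
apply: le_trans h7 _; apply: ler_wpM2r; first exact: sqr_ge0.
rewrite (bigD1 k) //= lerDl; apply: sumr_ge0 => l _.
have pl := pp0 l.
apply: divr_ge0; last by apply: mulr_ge0; exact: ltW.
by apply: mulr_ge0; [exact: sqr_ge0| exact: ltW (pp0 j)].
Qed.
Lemma nc_eq0 (R : realType) (x : R[i]) : nc x = 0 -> x = 0.
Proof. by move=> h; apply/eqP; rewrite -normr_eq0 ncE h. Qed.

Lemma cont_lim (R : realType) (f : Cplx R -> Cplx R) (c B : R)
  (hf : {within [set z : Cplx R | complex.Im z <= 0], continuous f})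
  (hb : forall t, 0 < t -> nc (f (1 +i* -t) - c%:C) ^+ 2 <= B * t ^+ 2) :
  f 1 = c%:C.
Proof.
have := (subspace_continuousP _ _).1 hf 1.
move=> /(_ (le_refl _)) /cvgrPdist_lt hc.
apply/eqP/negPn/negP => hne.
pose e := nc (f 1 - c%:C).
have e0 : 0 < e.
  rewrite lt_neqAle nc_ge0 andbT; apply/negP => /eqP he.
  move: hne; rewrite -subr_eq0; apply/negP/negPn/eqP.
  exact: nc_eq0.
have := hc ((e / 2)%:C) ltac:(by rewrite ltcR; lra).
rewrite near_withinE => /nbhs_normP [d /= d0 hd].
move: d d0 hd => [dr di] d0 hd.
move: d0; rewrite ltcE /= => /andP[/eqP di0 dr0]; subst di.
pose t := Num.min (Num.min (dr / 2) 1) (e / (2 * (`|B| + 1))).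
have B1 : 0 < `|B| + 1 by have := normr_ge0 B; lra.
have t0 : 0 < t.
  rewrite /t !lt_min; apply/andP; split; first (apply/andP; split); try lra.
  by apply: divr_gt0 => //; lra.
have tle1 : t <= dr / 2 by rewrite /t !ge_min lexx.
have tle2 : t <= 1 by rewrite /t !ge_min lexx orbT.
have tle3 : t <= e / (2 * (`|B| + 1)) by rewrite /t ge_min lexx orbT.
have e1 : (1 : R[i]) - (1 +i* -t) = 0 +i* t.
  by apply/eqP; rewrite eq_complex /=; apply/andP; split; apply/eqP; ring.
have h1 := hd (1 +i* -t).
have : `|f 1 - f (1 +i* -t)| < (e / 2)%:C.
  apply: h1; last by rewrite /= oppr_le0; exact: ltW.
  rewrite /ball_ /= e1 ncE ltcR /nc /= expr0n add0r sqrtr_sqr ger0_norm; last exact: ltW.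
  lra.
rewrite ncE ltcR => h2.
have h3 := hb t t0.
have h4 : nc (f (1 +i* -t) - c%:C) < e / 2.
  have hn := nc_ge0 (f (1 +i* -t) - c%:C).
  have : B * t ^+ 2 < (e / 2) ^+ 2.
    have tt : t * (2 * (`|B| + 1)) <= e by rewrite -ler_pdivlMr // mulr_gt0.
    have bB := ler_norm B.
    have nB := normr_ge0 B.
    set u := t * (`|B| + 1).
    have u0 : 0 < u by apply: mulr_gt0.
    have ue : u <= e / 2 by rewrite /u; lra.
    have h6 : u ^+ 2 <= (e / 2) ^+ 2 by rewrite ler_pXn2r // ?nnegrE; lra.
    have h7 : B * t ^+ 2 < u ^+ 2.
      rewrite /u exprMn; have tt2 : 0 < t ^+ 2 by rewrite exprn_gt0.
      have : B < (`|B| + 1) ^+ 2 by nra.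
      move=> hh; rewrite mulrC; rewrite ltr_pM2l //.
    lra.
  move: (nc _) hn h3 => x hx h3 h5.
  nra.
have h5 : e <= nc (f 1 - f (1 +i* -t)) + nc (f (1 +i* -t) - c%:C).
  rewrite /e; have -> : f 1 - c%:C = (f 1 - f (1 +i* -t)) + (f (1 +i* -t) - c%:C) by ring.
  exact: ncD.
lra.
Qed.

Lemma GammaE (R : realType) K (rho : 'I_K -> R) (S : 'M[R]_K) k l :
  GammaK rho S k l = S k l * rho l.
Proof. by rewrite /GammaK mul_mx_diag !mxE. Qed.

Lemma main_aux (R : realType) (K : nat) (hK : (0 < K)%N)
  (rho : 'I_K -> R) (hrho : forall k, 0 < rho k < 1)
  (hrho1 : \sum_(k < K) rho k = 1)
  (S : 'M[R]_K) (hSsym : S^T = S) (hSpos : forall k l, 0 < S k l)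
  (g : Cplx R -> 'I_K -> Cplx R) (hg : QVE_solution_ext rho S g) :
  1 < lambda1 (OmegaK rho S) ->
  forall k : 'I_K, 0 < g 1 k < 1.
Proof.
move=> hl k.
pose G := fun k l => S k l * rho l.
have G0 : forall k l, 0 < G k l.
  by move=> k1 l; apply: mulr_gt0 => //; have /andP[] := hrho l.
have [a [a1 [p [p0 hp]]]] :=
  perron (fun k => proj1 (andP (hrho k))) hSsym hSpos hl.
have [r [hr hfix]] := @fixpt R K k G (fun k l => ltW (G0 k l)) a p a1 p0 hp.
case: hg => hpos heq hcont.
suff -> : g 1 k = (r k)%:C.
  by rewrite !ltcR; have := hr k.
apply: (@cont_lim R (fun z => g z k) (r k)
  (\sum_k0 ((2 * r k0 / (1 - r k0)) ^+ 2 * (1 - r k) / ((1 - r k0) * G k0 k)))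
  (hcont k)) => t t0.
have hz : @Hminus R (1 +i* -t) by rewrite /Hminus /=; lra.
apply: (@estimate R K G G0 r hr hfix (g (1 +i* -t)) t t0).
  by move=> l; exact: (hpos _ hz l).
move=> l.
have -> : \sum_m (G l m)%:C * (g (1 +i* -t) m - 1) =
    \sum_m (GammaK rho S l m)%:C * (g (1 +i* -t) m - 1).
  by apply: eq_bigr => m _; rewrite GammaE.
exact: heq _ hz l.
Qed.

Local Close Scope complex_scope.
Local Close Scope classical_set_scope.
Unset Implicit Arguments.

Theorem mainTheorem10 (R : realType) (K : nat) (hK : (0 < K)%N)
  (rho : 'I_K -> R) (hrho : forall k, 0 < rho k < 1)
  (hrho1 : \sum_(k < K) rho k = 1)
  (S : 'M[R]_K) (hSsym : S^T = S) (hSpos : forall k l, 0 < S k l)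
  (g : Cplx R -> 'I_K -> Cplx R) (hg : QVE_solution_ext rho S g) :
  1 < lambda1 (OmegaK rho S) ->
  forall k : 'I_K, 0 < g 1 k < 1.
Proof. exact: (@main_aux R K hK rho hrho hrho1 S hSsym hSpos g hg). Qed.
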